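(* Let $n=2p+1$ with $p\ge1$ an integer and let $1\le k\le p$. If $g$ is a smooth function defined on a neighbourhood of the origin in $\mathbb{R}^n$ which is spherically symmetric (i.e. $g(\vec x)=g(r)$ depends only on $r=|\vec x|$) and satisfies $(I-\Delta)^kg=0$, where $\Delta$ is the Laplacian on $\mathbb{R}^n$, then there are constants $c_{p-k+1},\dots,c_p$ such that \[g(r)=\sum_{i=p-k+1}^pc_i\tau_i(r).\]
   Context: The functions $\tau_i$ are defined by $\tau_0=\cosh$ and $\tau_{i+1}(r)=-\frac1r\tau_i'(r)$ for $r\ne0$, extended to even real-analytic functions on $\mathbb{R}$; $\tau_i(r)$ is regarded as the spherically symmetric function $\vec x\mapsto\tau_i(|\vec x|)$ on $\mathbb{R}^n$. *)

(* Defs.v *)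
From HB Require Import structures.
From mathcomp Require Import all_boot all_order all_algebra.
From mathcomp Require Import all_classical all_reals all_analysis.
Set Implicit Arguments. Unset Strict Implicit. Unset Printing Implicit Defensive.
Import Order.TTheory GRing.Theory Num.Theory.
Import numFieldNormedType.Exports.
Local Open Scope ring_scope.
Local Open Scope classical_set_scope.

Definition coshR {R : realType} (x : R) : R := (expR x + expR (- x)) / 2.

Fixpoint tau {R : realType} (i : nat) : R -> R :=
  match i with
  | 0 => coshR
  | i'.+1 => fun r =>
      if r == 0 then lim ((fun s : R => - (derive1 (tau i') s) / s) @ 0^')
      else - (derive1 (tau i') r) / r
  end.

Definition eucl_norm {R : realType} {n : nat} (x : 'rV[R]_n) : R :=
  Num.sqrt (\sum_(i < n) x ord0 i ^+ 2).

Definition ebasis {R : realType} {n : nat} (i : 'I_n) : 'rV[R]_n := delta_mx ord0 i.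

Definition partial {R : realType} {n : nat} (i : 'I_n) (f : 'rV[R]_n -> R)
  : 'rV[R]_n -> R := fun x => derive f x (ebasis i).

Definition partials {R : realType} {n : nat} (s : seq 'I_n) (f : 'rV[R]_n -> R)
  : 'rV[R]_n -> R := foldr partial f s.

Definition smooth_on {R : realType} {n : nat} (U : set 'rV[R]_n)
  (f : 'rV[R]_n -> R) : Prop :=
  forall s : seq 'I_n, forall x, U x ->
    {for x, continuous (partials s f)} /\
    (forall i : 'I_n, derivable (partials s f) x (ebasis i)).

Definition laplacian {R : realType} {n : nat} (f : 'rV[R]_n -> R) : 'rV[R]_n -> R :=
  fun x => \sum_(i < n) partial i (partial i f) x.

Definition helmholtz {R : realType} {n : nat} (f : 'rV[R]_n -> R) : 'rV[R]_n -> R :=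
  fun x => f x - laplacian f x.

(* Main.v *)
Require Import Defs.
From HB Require Import structures.
From mathcomp Require Import all_boot all_order all_algebra.
From mathcomp Require Import all_classical all_reals all_analysis.
From mathcomp Require Import ring lra zify.
Set Implicit Arguments. Unset Strict Implicit. Unset Printing Implicit Defensive.
Import Order.TTheory GRing.Theory Num.Theory.
Import numFieldNormedType.Exports.
Local Open Scope ring_scope.
Local Open Scope classical_set_scope.
Section Coef.
Variable R : realType.

Definition acoef (i j : nat) : R :=
  2 ^+ i * (j + i)`!%:R / (j`!%:R * (2 * (j + i))`!%:R).

Lemma fact_neq0 n : (n`!%:R : R) != 0.
Proof. by rewrite pnatr_eq0 -lt0n fact_gt0. Qed.

Lemma acoef_gt0 i j : 0 < acoef i j.
Proof.
rewrite /acoef divr_gt0 // ?mulr_gt0 ?exprn_gt0 // ltr0n fact_gt0.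
Qed.

Lemma acoefD i j : j.+1%:R * acoef i j.+1 = acoef i.+1 j / 2.
Proof.
rewrite /acoef addSnnS factS natrM.
have h1 := fact_neq0 j. have h2 := fact_neq0 (2 * (j + i.+1)).
rewrite exprS. field. by rewrite h1 h2 /= nat1r pnatr_eq0.
Qed.

Lemma acoefK i j : acoef i j = (2 * (j + i)).+1%:R * acoef i.+1 j.
Proof.
rewrite /acoef addnS; set m := (j + i)%N.
have -> : (2 * m.+1 = (2 * m).+2)%N by rewrite mulnS add2n.
rewrite !factS !natrM exprS.
have h1 := fact_neq0 j. have h2 := fact_neq0 (2 * m).
rewrite -!natr1 !natrM. field. rewrite h1 h2 /=.
by apply/and3P; split => //; apply/lt0r_neq0; have := ler0n R m; lra.
Qed.

Lemma acoef_le i j : acoef i j <= 2 ^+ i / j`!%:R.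
Proof.
have -> : acoef i j = (2 ^+ i / j`!%:R) * ((j + i)`!%:R / (2 * (j + i))`!%:R).
  rewrite /acoef; field.
  by rewrite fact_neq0 fact_neq0.
apply: ler_piMr; first by rewrite divr_ge0 // exprn_ge0.
rewrite ler_pdivrMr ?ltr0n ?fact_gt0 // mul1r ler_nat leq_fact //.
by rewrite mul2n -addnn leq_addr.
Qed.

End Coef.
Section Tser.
Variable R : realType.
Local Notation acoef := (@acoef R).

Lemma cvg_pseries_bnd (c : nat -> R) C x :
  (forall j, `|c j| <= C / j`!%:R) -> cvgn (pseries c x).
Proof.
move=> hc; apply: normed_cvg.
have C0 : 0 <= C by have := hc 0%N; rewrite fact0 divr1; apply: le_trans.
apply: (@series_le_cvg _ _ (C *: exp_coeff `|x|)).
- by move=> n; rewrite /= normr_ge0.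
- by move=> n; rewrite /= mulr_ge0 // exp_coeff_ge0.
- move=> n /=; rewrite normrM normrX /exp_coeff /=.
  have -> : (C *: (fun n0 : nat => `|x| ^+ n0 / n0`!%:R)) n = C * (`|x| ^+ n / n`!%:R) by [].
  apply: (le_trans (ler_wpM2r _ (hc n))); first exact: exprn_ge0.
  by rewrite mulrAC mulrA.
- exact/is_cvg_seriesZ/is_cvg_series_exp_coeff.
Qed.

Lemma natr2S m : ((2 * m).+1%:R : R) = 2 * m%:R + 1.
Proof. by rewrite -natr1 natrM. Qed.

Definition Tf (i : nat) (x : R) : R := limn (pseries (acoef i) x).

Lemma cvg_Tf i x : cvgn (pseries (acoef i) x).
Proof.
apply: (@cvg_pseries_bnd _ (2 ^+ i)) => j.
by rewrite ger0_norm ?acoef_le // ltW // acoef_gt0.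
Qed.

Lemma pdiffs_acoef i : pseries_diffs (acoef i) = (fun j => acoef i.+1 j / 2).
Proof. by apply/funext => j; rewrite /pseries_diffs acoefD. Qed.

Lemma pseries_half (c : nat -> R) x :
  pseries (fun j => c j / 2) x = 2^-1 *: pseries c x.
Proof.
apply/funext => n; rewrite /pseries /series /=.
rewrite [RHS](_ : _ = 2^-1 * \sum_(0 <= k < n) c k * x ^+ k) // mulr_sumr.
by apply: eq_bigr => j _; rewrite /= mulrAC mulrC.
Qed.

Lemma Tf_der (i : nat) (x : R) : is_derive x (1:R) (Tf i) (Tf i.+1 x / 2).
Proof.
have -> : Tf i.+1 x / 2 = limn (pseries (pseries_diffs (acoef i)) x).
  rewrite pdiffs_acoef pseries_half limZl_tmp; last exact: cvg_Tf.
  by rewrite mulrC.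
have h1 := cvg_Tf (i:=i) (x:=`|x| + 1).
have h2 : cvgn (pseries (pseries_diffs (acoef i)) (`|x| + 1)).
  by rewrite pdiffs_acoef pseries_half; apply: is_cvgZl_tmp; exact: cvg_Tf.
have h3 : cvgn (pseries (pseries_diffs (pseries_diffs (acoef i))) (`|x| + 1)).
  rewrite pdiffs_acoef.
  apply: (@cvg_pseries_bnd _ (2 ^+ i.+2)) => j.
  rewrite /pseries_diffs ger0_norm; last first.
    by rewrite mulr_ge0 // divr_ge0 // ltW // acoef_gt0.
  rewrite mulrA acoefD.
  apply: le_trans (acoef_le R i.+2 j).
  rewrite -mulrA ler_piMr ?ltW ?acoef_gt0 //.
  lra.
have h4 : `|x| < Num.norm (`|x| + 1).
  by rewrite [X in _ < X]ger0_norm; [lra|]; have := normr_ge0 x; lra.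
exact: (pseries_snd_diffs h1 h2 h3 h4).
Qed.

Lemma Tf_gt0 (i : nat) (x : R) : 0 <= x -> 0 < Tf i x.
Proof.
move=> x0; apply: (lt_le_trans (acoef_gt0 R i 0)).
have nd : nondecreasing_seq (pseries (acoef i) x).
  rewrite /pseries /series /=.
  apply: nondecreasing_series => n _ _.
  by rewrite mulr_ge0 // ?exprn_ge0 // ltW // acoef_gt0.
have := nondecreasing_cvgn_le nd (cvg_Tf (i:=i) (x:=x)) 1.
rewrite /Tf; apply: le_trans.
by rewrite /pseries /series /= big_nat1 expr0 mulr1.
Qed.

Lemma Tf_eig (i : nat) (x : R) : Tf i x = (2 * i).+1%:R * Tf i.+1 x + x * Tf i.+2 x.
Proof.
pose S k n := pseries (acoef k) x n.
have HS : forall n, S i n.+1 = (2 * i).+1%:R * S i.+1 n.+1 + x * S i.+2 n.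
  elim => [|n IH].
    rewrite /S /pseries /series /= !big_nat1 big_geq // mulr0 addr0 !expr0 !mulr1.
    by rewrite acoefK add0n.
  have SS : forall k m, S k m.+1 = S k m + acoef k m * x ^+ m.
    by move=> k m; rewrite /S /= /pseries seriesSr.
  rewrite (SS i n.+1) (SS i.+1 n.+1) (SS i.+2 n) IH.
  rewrite (acoefK R i n.+1).
  have h := acoefD R i.+1 n.
  have -> : acoef i.+2 n = 2 * (n.+1%:R * acoef i.+1 n.+1) by rewrite h; field.
  rewrite exprS !natr2S natrD -natr1. ring.
rewrite /Tf.
have cv : S i n.+1 @[n --> \oo] --> (2 * i).+1%:R * Tf i.+1 x + x * Tf i.+2 x.
  rewrite (_ : (fun n => S i n.+1) = (fun n => (2 * i).+1%:R * S i.+1 n.+1 + x * S i.+2 n)); last first.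
    by apply/funext => n; rewrite HS.
  apply: cvgD; apply: cvgMl_tmp.
    by rewrite (cvg_shiftS (fun n => S i.+1 n)); exact: cvg_Tf.
  exact: cvg_Tf.
move: cv; rewrite (cvg_shiftS (fun n => S i n)) => /cvg_lim <- //.
Qed.

End Tser.
Section Gen.
Variable R : realType.

Lemma is_derive_sq (r : R) : is_derive r (1:R) (fun s : R => s ^+ 2) (2 * r).
Proof.
apply: DeriveDef; first exact: exprn_derivable.
by rewrite exp_derive expr1 [_%:A]mulr1.
Qed.

Lemma der_cont (f : R -> R) x d : is_derive x (1:R) f d -> {for x, continuous f}.
Proof. by case=> df _; apply/differentiable_continuous/derivable1_diffP. Qed.

Lemma cst_itv (f : R -> R) (a b : R) :
  (forall x, a < x < b -> is_derive x (1:R) f 0) ->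
  forall x y : R, a < x < b -> a < y < b -> f x = f y.
Proof.
move=> hd x y.
wlog xy : x y / x <= y.
  move=> H hx hy; case: (leP x y) => [/H|/ltW /H]; first by apply.
  by move=> h; apply/esym/h.
move=> /andP[ax xb] /andP[ay yb].
have := @MVT_segment R f (fun _ => 0) x y xy.
case.
- move=> z; rewrite in_itv /= => /andP[xz zy]; apply: hd.
  by apply/andP; split; [apply: lt_trans xz|apply: lt_trans yb].
- apply: derivable_within_continuous => z; rewrite in_itv /= => /andP[xz zy].
  have : a < z < b by apply/andP; split; [apply: lt_le_trans xz|apply: le_lt_trans yb].
  by move/hd => [].
- by move=> c _ /eqP; rewrite mul0r subr_eq0 => /eqP ->.
Qed.

End Gen.
Section Dlem.
Variable R : realType.
Implicit Types (f g : R -> R) (x a b d k : R).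

Lemma dD f g x a b d : is_derive x (1:R) f a -> is_derive x (1:R) g b -> a + b = d ->
  is_derive x (1:R) (fun y => f y + g y) d.
Proof. by move=> ha hb <-; have := is_deriveD ha hb. Qed.

Lemma dB f g x a b d : is_derive x (1:R) f a -> is_derive x (1:R) g b -> a - b = d ->
  is_derive x (1:R) (fun y => f y - g y) d.
Proof. by move=> ha hb <-; have := is_deriveB ha hb. Qed.

Lemma dM f g x a b d : is_derive x (1:R) f a -> is_derive x (1:R) g b ->
  f x * b + a * g x = d ->
  is_derive x (1:R) (fun y => f y * g y) d.
Proof.
move=> ha hb <-; have := is_deriveM ha hb.
by rewrite /GRing.scale /= [a * _]mulrC.
Qed.

Lemma dcst x k : is_derive x (1:R) (fun _ => k) 0.
Proof. exact: is_derive_cst. Qed.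

Lemma did x : is_derive x (1:R) (fun y => y) 1.
Proof. exact: is_derive_id. Qed.

Lemma dcomp f g x a b d : is_derive (g x) (1:R) f a -> is_derive x (1:R) g b ->
  a * b = d -> is_derive x (1:R) (fun y => f (g y)) d.
Proof. by move=> ha hb <-; have := is_derive1_comp ha hb. Qed.

Lemma dV f x a d : f x != 0 -> is_derive x (1:R) f a -> - (f x) ^- 2 * a = d ->
  is_derive x (1:R) (fun y => (f y)^-1) d.
Proof. by move=> h ha <-; have := is_deriveV h ha. Qed.

Lemma deq f x a d : is_derive x (1:R) f a -> a = d -> is_derive x (1:R) f d.
Proof. by move=> h <-. Qed.

End Dlem.
Section Tau.
Variable R : realType.
Local Notation Tf := (@Tf R).

Lemma Tf0 i : Tf i 0 = acoef R i 0.
Proof.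
rewrite /Tf; apply: cvg_lim => //.
rewrite -cvg_shiftS.
have -> : (fun n => pseries (acoef R i) 0 n.+1) = (fun _ => acoef R i 0).
  apply/funext => n; rewrite /pseries /series /= big_nat_recl //= expr0 mulr1.
  by rewrite big1 ?addr0 // => k _; rewrite expr0n /= mulr0.
exact: cvg_cst.
Qed.

Lemma Tf_cont i : continuous (Tf i).
Proof. by move=> x; apply: der_cont (Tf_der i x). Qed.

Definition sinhR (x : R) : R := (expR x - expR (- x)) / 2.

Lemma dneg (x : R) : is_derive x (1:R) (fun y : R => - y) (-1).
Proof. exact: is_deriveNid. Qed.

Lemma dexpN (x : R) : is_derive x (1:R) (fun y : R => expR (- y)) (- expR (- x)).
Proof. by apply: dcomp (is_derive_expR _) (dneg x) _; rewrite mulrN1. Qed.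

Lemma dcosh (x : R) : is_derive x (1:R) coshR (sinhR x).
Proof.
have -> : coshR = (fun y : R => (expR y + expR (- y)) * 2^-1) by [].
apply: dM (dD (is_derive_expR x) (dexpN x) erefl) (dcst _ _) _.
by rewrite mulr0 add0r.
Qed.

Lemma dsinh (x : R) : is_derive x (1:R) sinhR (coshR x).
Proof.
have -> : sinhR = (fun y : R => (expR y - expR (- y)) * 2^-1) by [].
apply: dM (dB (is_derive_expR x) (dexpN x) erefl) (dcst _ _) _.
by rewrite mulr0 add0r opprK.
Qed.

Lemma dTsq i (r : R) :
  is_derive r (1:R) (fun s => Tf i (s ^+ 2)) (r * Tf i.+1 (r ^+ 2)).
Proof.
by apply: dcomp (Tf_der i _) (is_derive_sq r) _; field.
Qed.

Lemma coshR_T (r : R) : coshR r = Tf 0 (r ^+ 2).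
Proof.
pose h y := coshR y - Tf 0 (y ^+ 2).
pose h1 y := sinhR y - y * Tf 1 (y ^+ 2).
have dh y : is_derive y (1:R) h (h1 y).
  apply: dB (dcosh y) (dTsq 0 y) _; done.
have dh1 y : is_derive y (1:R) h1 (h y).
  apply: dB (dsinh y) (dM (did y) (dTsq 1 y) erefl) _.
  by rewrite /h (Tf_eig 0 (y ^+ 2)) muln0 mul1r expr2; ring.
have h0 : h 0 = 0.
  rewrite /h expr0n /= Tf0 /acoef /coshR oppr0 expR0 /=.
  by rewrite expr0 fact0 mul1r mul1r; field.
have h10 : h1 0 = 0 by rewrite /h1 /sinhR oppr0 expR0 subrr mul0r mul0r subr0.
have E0 y : h y + h1 y = 0.
  pose E z := (h z + h1 z) * expR (- z).
  have dE z : is_derive z (1:R) E 0.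
    apply: dM (dD (dh z) (dh1 z) erefl) (dexpN z) _.
    rewrite /=; ring.
  have := is_derive_0_is_cst y 0 dE.
  rewrite /E h0 h10 addr0 mul0r => /eqP; rewrite mulf_eq0 expR_eq0 orbF.
  by move/eqP.
pose D z := h z * expR z.
have dD0 z : is_derive z (1:R) D 0.
  apply: dM (dh z) (is_derive_expR z) _.
  by rewrite -mulrDl E0 mul0r.
have := is_derive_0_is_cst r 0 dD0.
rewrite /D h0 mul0r => /eqP; rewrite mulf_eq0 expR_eq0 orbF /h subr_eq0.
by move/eqP.
Qed.

End Tau.
Section Tau2.
Variable R : realType.
Local Notation Tf := (@Tf R).

Lemma tau_T i : @tau R i = fun r => (-1) ^+ i * Tf i (r ^+ 2).
Proof.
elim: i => [|i IH]; apply/funext => r.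
  by rewrite /= coshR_T expr0 mul1r.
have hd : derive1 (@tau R i) = fun s => (-1) ^+ i * (s * Tf i.+1 (s ^+ 2)).
  apply/funext => s; rewrite IH derive1E; apply: derive_val.
  by apply: dM (dcst _ _) (dTsq i s) _; rewrite mul0r addr0.
rewrite /= hd; case: eqP => [->|/eqP r0]; last first.
  by rewrite [(-1) ^+ i.+1]exprS; field.
apply: cvg_lim => //.
pose phi (s : R) := (-1) ^+ i.+1 * Tf i.+1 (s ^+ 2).
have hc : phi s @[s --> (0:R)^'] --> phi 0.
  apply/continuous_withinNx.
  apply: der_cont; apply: dM (dcst _ _) (dTsq i.+1 0) erefl.
apply: cvg_trans hc; apply: near_eq_cvg.
near=> s.
have s0 : s != 0 by near: s; exact: nbhs_dnbhs_neq.
by rewrite /phi [(-1) ^+ i.+1]exprS; field.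
Unshelve. all: by end_near.
Qed.

End Tau2.
Section TauProps.
Variable R : realType.

Lemma tau_der i (r : R) : is_derive r (1:R) (@tau R i) (- r * tau i.+1 r).
Proof.
rewrite !tau_T.
apply: dM (dcst _ _) (dTsq i r) _.
by rewrite mul0r addr0 [(-1) ^+ i.+1]exprS; ring.
Qed.

Lemma tau_cont i : continuous (@tau R i).
Proof. by move=> x; apply: der_cont (tau_der i x). Qed.

Lemma tau_eig i (r : R) :
  tau i r = - (2 * i).+1%:R * tau i.+1 r + r ^+ 2 * tau i.+2 r.
Proof.
rewrite !tau_T /= (Tf_eig i (r ^+ 2)) !exprS; ring.
Qed.

Lemma tau_neq0 i (r : R) : tau i r != 0.
Proof.
rewrite tau_T /= mulf_neq0 //; first by rewrite expf_neq0 // oppr_eq0 oner_eq0.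
by rewrite gt_eqF // Tf_gt0 // sqr_ge0.
Qed.

End TauProps.

Section Cont.
Variable R : realType.
Implicit Types (f g : R -> R) (x : R).

Lemma cM f g x : {for x, continuous f} -> {for x, continuous g} ->
  {for x, continuous (fun y => f y * g y)}.
Proof. by move=> hf hg; apply: cvgM. Qed.
Lemma cD f g x : {for x, continuous f} -> {for x, continuous g} ->
  {for x, continuous (fun y => f y + g y)}.
Proof. by move=> hf hg; apply: cvgD. Qed.
Lemma cB f g x : {for x, continuous f} -> {for x, continuous g} ->
  {for x, continuous (fun y => f y - g y)}.
Proof. by move=> hf hg; apply: cvgB. Qed.

Lemma cont_right_eq (V : R -> R) (C eps : R) : 0 < eps ->
  {for 0, continuous V} -> (forall r, 0 < r < eps -> V r = C) -> V 0 = C.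
Proof.
move=> e0 hV hC.
have h1 : V r @[r --> (0:R)^'+] --> V 0 by apply: cvg_at_right_filter.
have h2 : V r @[r --> (0:R)^'+] --> C.
  have hcst : (fun _ : R => C) @ (0:R)^'+ --> C by apply: cvg_cst.
  apply: cvg_trans hcst; apply: near_eq_cvg.
  near=> r; apply/esym/hC; apply/andP; split.
    by near: r; exact: nbhs_right_gt.
  by near: r; apply: nbhs_right_lt; rewrite e0.
have E1 := cvg_lim (@Rhausdorff R) h1.
have E2 := cvg_lim (@Rhausdorff R) h2.
by rewrite -E1 // E2.
Unshelve. all: by end_near.
Qed.

End Cont.
Section Wronsk.
Variable R : realType.

Lemma dpow (m : nat) (r : R) :
  is_derive r (1:R) (fun s : R => s ^+ m) (m%:R * r ^+ m.-1).
Proof.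
apply: DeriveDef; first exact: exprn_derivable.
by rewrite exp_derive [_ *: 1]mulr1.
Qed.

Lemma wronsk (p : nat) (eps : R) (u u1 u2 w w1 w2 : R -> R) :
  0 < eps -> (0 < p)%N ->
  (forall r, 0 < r < eps ->
     [/\ is_derive r (1:R) u (u1 r), is_derive r (1:R) u1 (u2 r),
         is_derive r (1:R) w (w1 r), is_derive r (1:R) w1 (w2 r) &
         [/\ u2 r = u r - p.*2%:R / r * u1 r, w2 r = w r - p.*2%:R / r * w1 r
           & u r != 0]]) ->
  {for 0, continuous u} -> {for 0, continuous u1} ->
  {for 0, continuous w} -> {for 0, continuous w1} ->
  exists c, forall r, 0 < r < eps -> w r = c * u r.
Proof.
move=> e0 p0 H cu cu1 cw cw1.
set m := p.*2.
have m0 : (0 < m)%N by rewrite double_gt0.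
have he : 0 < eps / 2 < eps by apply/andP; split; lra.
pose V r := r ^+ m * (u r * w1 r - u1 r * w r).
have dVV r : 0 < r < eps -> is_derive r (1:R) V 0.
  move=> hr; have [du du1 dw dw1 [e1 e2 _]] := H r hr.
  apply: dM (dpow m r) (dB (dM du dw1 erefl) (dM du1 dw erefl) erefl) _.
  rewrite e1 e2.
  have r0 : r != 0 by move: hr => /andP[/gt_eqF -> _].
  have -> : r ^+ m = r * r ^+ m.-1 by rewrite -exprS prednK.
  by field.
have Vc r : 0 < r < eps -> V r = V (eps / 2).
  by move=> hr; apply: (cst_itv dVV hr he).
have V0 : V 0 = V (eps / 2).
  apply: (cont_right_eq e0 _ Vc).
  apply: cM; first exact: der_cont (dpow m 0).
  by apply: cB; apply: cM.
have C0 : V (eps / 2) = 0.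
  by rewrite -V0 /V expr0n (gtn_eqF m0) mul0r.
have W0 r : 0 < r < eps -> u r * w1 r - u1 r * w r = 0.
  move=> hr; have := Vc r hr; rewrite C0 /V => /eqP.
  rewrite mulf_eq0 expf_eq0 m0 /=.
  by move: hr => /andP[/gt_eqF -> _] /eqP.
pose q r := w r * (u r)^-1.
have dq r : 0 < r < eps -> is_derive r (1:R) q 0.
  move=> hr; have [du du1 dw dw1 [e1 e2 un]] := H r hr.
  apply: dM dw (dV un du erefl) _.
  rewrite (_ : _ + _ = (u r * w1 r - u1 r * w r) / (u r) ^+ 2).
    by rewrite W0 // mul0r.
  by field.
exists (q (eps / 2)) => r hr.
have := cst_itv dq hr he; rewrite /q => <-.
have [_ _ _ _ [_ _ un]] := H r hr.
by field.
Qed.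

End Wronsk.
Section GenV.
Variable R : realType.
Variable V : normedModType R.
Implicit Types (f g : V -> R) (x v : V).

Lemma deriv_line f x v : 'D_v f x = 'D_(1:R) (fun h : R => f (h *: v + x)) 0.
Proof.
rewrite /derive.
rewrite [X in _ = lim (X @ _)](_ : _ = (fun h : R => h^-1 *: ((f \o shift x) (h *: v) - f x))) //.
apply/funext => h /=.
by rewrite scale0r add0r addr0 [h%:A]mulr1.
Qed.

Lemma isd_line f x v d :
  is_derive (0:R) (1:R) (fun h : R => f (h *: v + x)) d -> is_derive x v f d.
Proof.
case=> h1 h2; apply: DeriveDef; first exact/derivable1P.
by rewrite deriv_line.
Qed.

Lemma isd_line' f x v d :
  is_derive x v f d -> is_derive (0:R) (1:R) (fun h : R => f (h *: v + x)) d.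
Proof.
case=> h1 h2; apply: DeriveDef; first exact: (proj1 (derivable1P f x v) h1).
by rewrite -deriv_line.
Qed.

Lemma dBv f g x v a b d : is_derive x v f a -> is_derive x v g b -> a - b = d ->
  is_derive x v (fun y => f y - g y) d.
Proof. by move=> ha hb <-; have := is_deriveB ha hb. Qed.

Lemma dsumv (I : Type) (s : seq I) (F : I -> V -> R) (dF : I -> R) x v :
  (forall i, is_derive x v (F i) (dF i)) ->
  is_derive x v (fun y => \sum_(i <- s) F i y) (\sum_(i <- s) dF i).
Proof.
move=> hF; elim: s => [|a s IH].
  rewrite big_nil; have -> : (fun y : V => \sum_(i <- [::]) F i y) = (fun _ => 0).
    by apply/funext => y; rewrite big_nil.
  exact: is_derive_cst.
rewrite big_cons.
have -> : (fun y : V => \sum_(i <- a :: s) F i y) = (fun y => F a y + \sum_(i <- s) F i y).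
  by apply/funext => y; rewrite big_cons.
by have := is_deriveD (hF a) IH.
Qed.

End GenV.

Section GenT.
Variable R : realType.
Variable T : topologicalType.

Lemma csum (I : Type) (s : seq I) (F : I -> T -> R) x :
  (forall i, {for x, continuous (F i)}) ->
  {for x, continuous (fun y => \sum_(i <- s) F i y)}.
Proof.
move=> hF; elim: s => [|a s IH].
  have -> : (fun y : T => \sum_(i <- [::]) F i y) = (fun _ => 0).
    by apply/funext => y; rewrite big_nil.
  exact: cvg_cst.
have -> : (fun y : T => \sum_(i <- a :: s) F i y) = (fun y => F a y + \sum_(i <- s) F i y).
  by apply/funext => y; rewrite big_cons.
by apply: cvgD; [apply: hF|apply: IH].
Qed.

Lemma cont_near (f g : T -> R) x : (\forall y \near x, f y = g y) ->
  {for x, continuous g} -> {for x, continuous f}.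
Proof.
move=> hn hg.
have e : f x = g x by apply: (nbhs_singleton hn).
rewrite /prop_for /continuous_at e.
apply: cvg_trans hg; apply: near_eq_cvg.
by near=> y; apply/esym; near: y.
Unshelve. all: by end_near.
Qed.

Lemma cBt (f g : T -> R) x : {for x, continuous f} -> {for x, continuous g} ->
  {for x, continuous (fun y => f y - g y)}.
Proof. by move=> hf hg; apply: cvgB. Qed.

Lemma cMt (f g : T -> R) x : {for x, continuous f} -> {for x, continuous g} ->
  {for x, continuous (fun y => f y * g y)}.
Proof. by move=> hf hg; apply: cvgM. Qed.

End GenT.
Section Norm.
Variable R : realType.
Variable m : nat.
Local Notation n := m.+1.
Local Notation N := (@eucl_norm R n).

Definition sq (x : 'rV[R]_n) : R := \sum_(j < n) x ord0 j ^+ 2.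

Lemma NE x : N x = Num.sqrt (sq x). Proof. by []. Qed.

Lemma sq_ge0 x : 0 <= sq x.
Proof. by rewrite /sq sumr_ge0 // => j _; rewrite sqr_ge0. Qed.

Lemma N_sq x : N x ^+ 2 = sq x.
Proof. by rewrite NE sqr_sqrtr // sq_ge0. Qed.

Lemma N_ge0 x : 0 <= N x.
Proof. by rewrite NE sqrtr_ge0. Qed.

Lemma ebE (i j : 'I_n) : (@ebasis R n i) ord0 j = (i == j)%:R.
Proof. by rewrite /ebasis mxE eqxx eq_sym. Qed.

Lemma sum_delta (i : 'I_n) (a : 'I_n -> R) : \sum_(j < n) (i == j)%:R * a j = a i.
Proof.
rewrite (bigD1 i) //= eqxx mul1r big1 ?addr0 // => j /negPf.
by rewrite eq_sym => ->; rewrite mul0r.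
Qed.

Lemma sq_line (h : R) (i : 'I_n) z :
  sq (h *: ebasis i + z) = h ^+ 2 + 2 * h * z ord0 i + sq z.
Proof.
rewrite /sq.
have -> : \sum_(j < n) (h *: ebasis i + z) ord0 j ^+ 2 =
  \sum_(j < n) ((i == j)%:R * h ^+ 2 + ((i == j)%:R * (2 * h * z ord0 j)) + z ord0 j ^+ 2).
  apply: eq_bigr => j _; rewrite !mxE eqxx /= [j == i]eq_sym.
  by case: (i == j); rewrite /= ?mul1r ?mul0r ?mulr0 ?add0r ?addr0 //; ring.
by rewrite !big_split /= !sum_delta.
Qed.

Lemma N_line0 (i : 'I_n) z : N (0 *: ebasis i + z) = N z.
Proof. by rewrite scale0r add0r. Qed.

Lemma Ne0 (r : R) : N (r *: ebasis ord0) = `|r|.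
Proof.
have := sq_line r ord0 0; rewrite addr0 => e.
by rewrite NE e /sq big1 ?mxE ?mulr0 ?addr0 // ?sqrtr_sqr // => j _; rewrite mxE expr0n.
Qed.

Lemma sq_eq0 x : sq x = 0 -> x = 0.
Proof.
move=> /eqP; rewrite /sq psumr_eq0 => [/allP H|j _]; last by rewrite sqr_ge0.
apply/matrixP => a j; rewrite ord1 mxE.
have := H j (mem_index_enum j); rewrite /= sqrf_eq0 => /eqP //.
Qed.

Lemma N_eq0 x : N x = 0 -> x = 0.
Proof.
move=> h; apply: sq_eq0; rewrite -N_sq h; exact: expr0n.
Qed.

Lemma N_gt0 x : x != 0 -> 0 < N x.
Proof.
move=> x0; rewrite lt_neqAle N_ge0 andbT eq_sym; apply/eqP => /N_eq0 h.
by rewrite h eqxx in x0.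
Qed.

Lemma N_zero : N 0 = 0.
Proof. by rewrite NE /sq big1 ?sqrtr0 // => j _; rewrite mxE expr0n. Qed.

Lemma N_cont : continuous N.
Proof.
move=> x; rewrite /eucl_norm.
apply: (@continuous_comp _ _ _ (fun y : 'rV[R]_n => \sum_(j < n) y ord0 j ^+ 2) Num.sqrt).
  apply: csum => j.
  have -> : (fun y : 'rV[R]_n => y ord0 j ^+ 2) = (fun y => y ord0 j * y ord0 j).
    by apply/funext => y; rewrite expr2.
  by apply: cMt; apply: (@coord_continuous R 1 n ord0 j).
exact: sqrt_continuous.
Qed.

Lemma d_psi (i : 'I_n) z : z != 0 ->
  is_derive (0:R) (1:R) (fun h : R => N (h *: ebasis i + z)) (z ord0 i / N z).
Proof.
move=> z0.
have -> : (fun h : R => N (h *: ebasis i + z)) =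
          (fun h => Num.sqrt (h ^+ 2 + 2 * z ord0 i * h + sq z)).
  by apply/funext => h; rewrite NE sq_line; congr Num.sqrt; ring.
have sp : 0 < sq z by rewrite -N_sq exprn_gt0 // N_gt0.
apply: (dcomp (f := Num.sqrt)
   (g := fun h => h ^+ 2 + 2 * z ord0 i * h + sq z)).
- rewrite expr0n /= mulr0 !add0r; exact: is_derive1_sqrt.
- rewrite ![_%:A]mulr1 !add0r addr0 NE; field.
  by rewrite gt_eqF // sqrtr_gt0.
Qed.

End Norm.
Section Radial.
Variable R : realType.
Variable m : nat.
Local Notation n := m.+1.
Local Notation N := (@eucl_norm R n).
Local Notation e0 := (@ebasis R n ord0).
Variable eps : R.
Variable g : 'rV[R]_n -> R.
Hypothesis heps : 0 < eps.
Hypothesis hs : smooth_on [set x : 'rV[R]_n | N x < eps] g.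
Hypothesis hr : forall x y, N x < eps -> N y < eps -> N x = N y -> g x = g y.

Definition fr (r : R) := g (r *: e0).
Definition f1 (r : R) := partial ord0 g (r *: e0).
Definition f2 (r : R) := partial ord0 (partial ord0 g) (r *: e0).

Lemma g_rad x : N x < eps -> g x = fr (N x).
Proof.
move=> hx; rewrite /fr; apply: hr => //; rewrite Ne0 ger0_norm ?N_ge0 //.
Qed.

Lemma line1 (G : 'rV[R]_n -> R) (v : 'rV[R]_n) (s d : R) :
  is_derive (s *: v) v G d -> is_derive s (1:R) (fun t => G (t *: v)) d.
Proof.
move=> /isd_line' hh; apply: isd_line.
have -> : (fun h : R => G ((h *: (1:R) + s) *: v)) = (fun h => G (h *: v + s *: v)).
  by apply/funext => h; rewrite [h *: (1:R)]mulr1 scalerDl.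
exact: hh.
Qed.

Lemma smooth_der (s : seq 'I_n) (y : 'rV[R]_n) (i : 'I_n) : N y < eps ->
  is_derive y (ebasis i) (partials s g) (partials (i :: s) g y).
Proof.
move=> hy; have [_ hd] := hs s hy.
exact: (derivableP (hd i)).
Qed.

Lemma smooth_cont (s : seq 'I_n) (y : 'rV[R]_n) : N y < eps ->
  {for y, continuous (partials s g)}.
Proof. by move=> hy; have [hc _] := hs s hy. Qed.

Lemma dfr (s : R) : `|s| < eps -> is_derive s (1:R) fr (f1 s).
Proof.
move=> hs0; apply: (line1 (G := g)).
have := smooth_der [::] ord0 (y := s *: e0); rewrite Ne0 => /(_ hs0) //.
Qed.

Lemma df1 (s : R) : `|s| < eps -> is_derive s (1:R) f1 (f2 s).
Proof.
move=> hs0; apply: (line1 (G := partial ord0 g)).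
have := smooth_der [:: ord0] ord0 (y := s *: e0); rewrite Ne0 => /(_ hs0) //.
Qed.

Lemma psi_near (i : 'I_n) z : z != 0 -> N z < eps ->
  \forall h \near (0:R), 0 < N (h *: ebasis i + z) < eps.
Proof.
move=> z0 hz.
have c : (fun h : R => N (h *: ebasis i + z)) @ (0:R) --> N z.
  have := der_cont (d_psi i z0); rewrite /prop_for /continuous_at N_line0 //.
near=> h; apply/andP; split.
  by near: h; apply: (cvgr_gt _ c); exact: N_gt0.
by near: h; apply: (cvgr_lt _ c).
Unshelve. all: by end_near.
Qed.

Lemma dA (i : 'I_n) z : z != 0 -> N z < eps ->
  is_derive z (ebasis i) g (f1 (N z) * (z ord0 i / N z)).
Proof.
move=> z0 hz; apply: isd_line.
apply: (@near_eq_is_derive _ _ _ (fun h : R => fr (N (h *: ebasis i + z))) (fun h : R => g (h *: ebasis i + z)) 0 1).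
  have := psi_near i z0 hz; apply: filterS => h /andP[_ hh].
  by rewrite -g_rad.
apply: dcomp (d_psi i z0) erefl.
rewrite N_line0; apply: dfr; rewrite ger0_norm ?N_ge0 //.
Qed.

Lemma pA (i : 'I_n) z : z != 0 -> N z < eps ->
  partial i g z = f1 (N z) * (z ord0 i / N z).
Proof. by move=> z0 hz; have [_ <-] := dA i z0 hz. Qed.

Lemma N_neq0 (y : 'rV[R]_n) : 0 < N y -> y != 0.
Proof. by move=> hy; apply/eqP => y0; move: hy; rewrite y0 N_zero ltxx. Qed.

Lemma dC (i : 'I_n) x : x != 0 -> N x < eps ->
  is_derive x (ebasis i) (partial i g)
    ((f2 (N x) / N x ^+ 2 - f1 (N x) / N x ^+ 3) * x ord0 i ^+ 2 + f1 (N x) / N x).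
Proof.
move=> x0 hx; apply: isd_line.
pose psi h := N (h *: ebasis i + x).
apply: (@near_eq_is_derive _ _ _
  (fun h : R => f1 (psi h) * (h + x ord0 i) * (psi h)^-1) (fun h : R => partial i g (h *: ebasis i + x)) 0 1).
  have := psi_near i x0 hx; apply: filterS => h /andP[h0 hh].
  rewrite pA ?N_neq0 // /psi !mxE !eqxx /= mulr1.
  by rewrite mulrA.
have r0 : 0 < N x by apply: N_gt0.
have p0 : psi 0 = N x by rewrite /psi N_line0.
have H1 : is_derive (N (0 *: ebasis i + x)) (1:R) f1 (f2 (N x)).
  by rewrite N_line0; apply: df1; rewrite ger0_norm ?N_ge0.
have H2 : N (0 *: ebasis i + x) != 0 by rewrite N_line0 gt_eqF.
rewrite /psi.
have K1 := dcomp (f := f1) (g := fun h : R => N (h *: ebasis i + x)) H1 (d_psi i x0) erefl.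
have K2 := dD (did 0) (dcst 0 (x ord0 i)) erefl.
have K3 := dM K1 K2 erefl.
have K4 := dV (f := fun h : R => N (h *: ebasis i + x)) H2 (d_psi i x0) erefl.
apply: deq (dM K3 K4 erefl) _.
rewrite N_line0; field; by rewrite gt_eqF.
Qed.

Lemma Lap x : x != 0 -> N x < eps ->
  laplacian g x = f2 (N x) + m%:R / N x * f1 (N x).
Proof.
move=> x0 hx; rewrite /laplacian.
have r0 : 0 < N x by apply: N_gt0.
rewrite (eq_bigr (fun i => (f2 (N x) / N x ^+ 2 - f1 (N x) / N x ^+ 3) * x ord0 i ^+ 2
   + f1 (N x) / N x)); last by move=> i _; have [_ <-] := dC i x0 hx.
rewrite big_split /= -mulr_sumr sumr_const card_ord.
have -> : \sum_(i < n) x ord0 i ^+ 2 = N x ^+ 2 by rewrite N_sq.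
rewrite mulrS -mulr_natr; field; by rewrite gt_eqF.
Qed.

Lemma U_near x : N x < eps -> \forall y \near x, N y < eps.
Proof.
move=> hx; have c : N y @[y --> x] --> N x by apply: N_cont.
exact: (cvgr_lt _ c).
Qed.

Definition combo (s : seq 'I_n) (y : 'rV[R]_n) : R :=
  partials s g y - \sum_(i < n) partials (s ++ [:: i; i]) g y.

Lemma combo_der s x (j : 'I_n) : N x < eps ->
  is_derive x (ebasis j) (combo s) (combo (j :: s) x).
Proof.
move=> hx; apply: dBv (smooth_der s j hx) (dsumv _ _) erefl.
by move=> i; apply: smooth_der.
Qed.

Lemma combo_cont s x : N x < eps -> {for x, continuous (combo s)}.
Proof.
move=> hx; apply: cBt; first exact: smooth_cont.
by apply: csum => i; apply: smooth_cont.
Qed.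

Lemma H_comb s : forall x, N x < eps -> partials s (helmholtz g) x = combo s x.
Proof.
elim: s => [|j s IH] x hx; first by [].
have D := combo_der s j hx.
have D' : is_derive x (ebasis j) (partials s (helmholtz g)) (combo (j :: s) x).
  apply: near_eq_is_derive D.
  by have := U_near hx; apply: filterS => y hy; rewrite IH.
by have [_ <-] := D'.
Qed.

Lemma H_smooth : smooth_on [set x : 'rV[R]_n | N x < eps] (helmholtz g).
Proof.
move=> s x /= hx; split.
  apply: (cont_near (g := combo s)); last exact: combo_cont.
  by have := U_near hx; apply: filterS => y hy; rewrite H_comb.
move=> i; have [D _] := combo_der s i hx.
apply: near_eq_derivable D.
by have := U_near hx; apply: filterS => y hy; rewrite H_comb.
Qed.

Lemma H_val x : x != 0 -> N x < eps ->
  helmholtz g x = fr (N x) - (f2 (N x) + m%:R / N x * f1 (N x)).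
Proof. by move=> x0 hx; rewrite /helmholtz Lap // g_rad. Qed.

Lemma H_rad x y : N x < eps -> N y < eps -> N x = N y ->
  helmholtz g x = helmholtz g y.
Proof.
move=> hx hy e.
have [x0|x0] := eqVneq x 0.
  have y0 : y = 0 by apply: N_eq0; rewrite -e x0 N_zero.
  by rewrite x0 y0.
have y0 : y != 0 by apply: N_neq0; rewrite -e N_gt0.
by rewrite !H_val // e.
Qed.

End Radial.
Section Main.
Variable R : realType.
Variable p : nat.
Hypothesis hp : (0 < p)%N.
Local Notation n := p.*2.+1.
Local Notation N := (@eucl_norm R n).
Local Notation e0 := (@ebasis R n ord0).
Variable eps : R.
Hypothesis heps : 0 < eps.

Lemma dsumR (s : seq nat) (F : nat -> R -> R) (dF : nat -> R) (x : R) :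
  (forall i, is_derive x (1:R) (F i) (dF i)) ->
  is_derive x (1:R) (fun y => \sum_(i <- s) F i y) (\sum_(i <- s) dF i).
Proof. exact: dsumv. Qed.

Lemma fr_cont (G : 'rV[R]_n -> R) :
  {for (0 *: e0), continuous G} -> {for 0, continuous (fun r : R => G (r *: e0))}.
Proof.
move=> hG.
apply: (@continuous_comp _ _ _ (fun r : R => r *: e0) G).
  exact: scalel_continuous.
exact: hG.
Qed.

Lemma step k (g : 'rV[R]_n -> R) (c : nat -> R) : (k < p)%N ->
  smooth_on [set x | N x < eps] g ->
  (forall x y, N x < eps -> N y < eps -> N x = N y -> g x = g y) ->
  (forall x, N x < eps ->
     helmholtz g x = \sum_(p - k + 1 <= i < p.+1) c i * tau i (N x)) ->
  exists c' : nat -> R, forall x, N x < eps ->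
    g x = \sum_(p - k.+1 + 1 <= i < p.+1) c' i * tau i (N x).
Proof.
move=> kp hs hr hc.
set m := p.*2.
pose d j := c j.+1 / (2 * (p - j))%:R.
pose f0 r := \sum_(p - k <= j < p) d j * tau j r.
pose f01 r := \sum_(p - k <= j < p) d j * (- r * tau j.+1 r).
pose f02 r := \sum_(p - k <= j < p) d j * (- tau j.+1 r + r ^+ 2 * tau j.+2 r).
have df0 r : is_derive r (1:R) f0 (f01 r).
  apply: dsumR => j; apply: dM (dcst _ _) (tau_der j r) _.
  by rewrite mul0r addr0.
have df01 r : is_derive r (1:R) f01 (f02 r).
  apply: dsumR => j; apply: dM (dcst _ _) (dM (dneg r) (tau_der j.+1 r) erefl) _.
  by rewrite mul0r addr0 expr2; congr (_ * _); ring.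
have HL r : 0 < r < eps -> f2 g r =
    fr g r - m%:R / r * f1 g r - \sum_(p - k + 1 <= i < p.+1) c i * tau i r.
  move=> /andP[r0 re].
  have hx : N (r *: e0) < eps by rewrite Ne0 gtr0_norm.
  have x0 : r *: e0 != 0 by apply: N_neq0; rewrite Ne0 gtr0_norm.
  have := hc _ hx; rewrite (H_val hs hr x0 hx) Ne0 gtr0_norm // => e.
  by rewrite -e; ring.
have reidx r : \sum_(p - k + 1 <= i < p.+1) c i * tau i r =
    \sum_(p - k <= j < p) c j.+1 * tau j.+1 r.
  by rewrite addn1 big_add1.
have TI r : r != 0 -> f02 r = f0 r - m%:R / r * f01 r -
    \sum_(p - k <= j < p) c j.+1 * tau j.+1 r.
  move=> r0; rewrite /f02 /f0 /f01 mulr_sumr -!sumrB.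
  apply: eq_big_nat => j /andP[_ jp].
  have dj : c j.+1 = d j * (2 * (p - j))%:R.
    rewrite /d divfK // pnatr_eq0 muln_eq0 /= subn_eq0 -ltnNge jp //.
  rewrite dj (tau_eig j r) natrM natrB ?(ltnW jp) // /m -mul2n natrM natr2S.
  by field.
have [c0 hc0] : exists c0, forall r, 0 < r < eps -> fr g r - f0 r = c0 * tau p r.
  apply: (@wronsk R p eps (tau p) (fun r => - r * tau p.+1 r)
    (fun r => - tau p.+1 r + r ^+ 2 * tau p.+2 r) (fun r => fr g r - f0 r)
    (fun r => f1 g r - f01 r) (fun r => f2 g r - f02 r) heps hp).
  - move=> r hrr; have r0 : r != 0 by move: hrr => /andP[/gt_eqF -> _].
    have ar : `|r| < eps by move: hrr => /andP[r0' re]; rewrite gtr0_norm.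
    split.
    + exact: tau_der.
    + by apply: dM (dneg r) (tau_der p.+1 r) _; rewrite expr2; ring.
    + exact: dB (dfr hs ar) (df0 r) erefl.
    + exact: dB (df1 hs ar) (df01 r) erefl.
    + split.
      * by rewrite (tau_eig p r) natr2S -mul2n natrM; field.
      * by rewrite HL // reidx TI //; ring.
      * exact: tau_neq0.
  - exact: tau_cont.
  - exact: der_cont (dM (dneg 0) (tau_der p.+1 0) erefl).
  - apply: cB; last exact: der_cont (df0 0).
    apply: fr_cont; apply: (smooth_cont hs (s := [::])).
    by rewrite Ne0 normr0.
  - apply: cB; last exact: der_cont (df01 0).
    apply: fr_cont; apply: (smooth_cont hs (s := [:: ord0])).
    by rewrite Ne0 normr0.
pose cc i := if i == p then c0 else d i.
have hsum r : \sum_(p - k.+1 + 1 <= i < p.+1) cc i * tau i r = f0 r + c0 * tau p r.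
  have -> : (p - k.+1 + 1 = p - k)%N by lia.
  rewrite big_nat_recr /=; last by lia.
  rewrite /cc eqxx; congr (_ + _).
  by apply: eq_big_nat => i /andP[_ ip]; rewrite (ltn_eqF ip).
have hpos r : 0 < r < eps -> fr g r = \sum_(p - k.+1 + 1 <= i < p.+1) cc i * tau i r.
  by move=> hrr; rewrite hsum -hc0 //; ring.
exists cc => x hx.
have [x0|x0] := eqVneq x 0; last first.
  rewrite (g_rad hr hx) hpos //; apply/andP; split; [exact: N_gt0|exact: hx].
rewrite x0 N_zero.
have -> : g 0 = fr g 0 by rewrite /fr scale0r.
pose V r := fr g r - \sum_(p - k.+1 + 1 <= i < p.+1) cc i * tau i r.
have : V 0 = 0.
  apply: (cont_right_eq heps); last by move=> r hrr; rewrite /V hpos // subrr.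
  apply: cB.
    apply: fr_cont; apply: (smooth_cont hs (s := [::])).
    by rewrite Ne0 normr0.
  apply: csum => i; apply: cM; first exact: cvg_cst.
  exact: tau_cont.
by move/eqP; rewrite subr_eq0 => /eqP.
Qed.

Lemma main_ind k : (k <= p)%N -> forall g : 'rV[R]_n -> R,
  smooth_on [set x | N x < eps] g ->
  (forall x y, N x < eps -> N y < eps -> N x = N y -> g x = g y) ->
  (forall x, N x < eps -> iter k helmholtz g x = 0) ->
  exists c : nat -> R, forall x, N x < eps ->
    g x = \sum_(p - k + 1 <= i < p.+1) c i * tau i (N x).
Proof.
elim: k => [|k IH] hk g hs hr hz.
  exists (fun _ => 0) => x hx; rewrite big_geq ?subn0 ?addn1 //.
  exact: (hz x hx).
have hz' : forall x, N x < eps -> iter k helmholtz (helmholtz g) x = 0.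
  by move=> x hx; rewrite -iterSr; exact: hz.
have [c hc] := IH (ltnW hk) (helmholtz g) (H_smooth hs) (H_rad hs hr) hz'.
exact: step hk hs hr hc.
Qed.

End Main.

Unset Implicit Arguments.

Theorem theorem3p8 (R : realType) (p k : nat) (hp : (1 <= p)%N)
  (hk1 : (1 <= k)%N) (hkp : (k <= p)%N)
  (g : 'rV[R]_(p.*2.+1) -> R) (eps : R) (heps : 0 < eps) :
  let U := [set x : 'rV[R]_(p.*2.+1) | eucl_norm x < eps] in
  smooth_on U g ->
  (forall x y, U x -> U y -> eucl_norm x = eucl_norm y -> g x = g y) ->
  (forall x, U x -> iter k helmholtz g x = 0) ->
  exists c : nat -> R, forall x, U x ->
    g x = \sum_(p - k + 1 <= i < p.+1) c i * tau i (eucl_norm x).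
Proof.
move=> U hs hr hz.
exact: (main_ind hp heps hkp hs hr hz).
Qed.
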